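(* Fix a positive integer $u$ and define $f:\mathbb Z_{\ge0}\times\mathbb R_{\ge0}\to\mathbb R$ by $f(p,q)=qu$ if $q\le\lfloor p/u\rfloor$; $f(p,q)=u\lfloor p/u\rfloor+u\left(\tfrac pu-\lfloor \tfrac pu\rfloor\right)\left(q-\lfloor p/u\rfloor\right)$ if $\lfloor p/u\rfloor<q<\lceil p/u\rceil$; and $f(p,q)=p$ if $q\ge\lceil p/u\rceil$. Then for each fixed $p\in\mathbb Z_{\ge0}$, the function $q\mapsto f(p,q)$ is concave on $\mathbb R_{\ge0}$, and for each fixed $q\in\mathbb R_{\ge0}$, the function $p\mapsto f(p,q)$ is concave on $\mathbb Z_{\ge0}$ (i.e. $2f(p,q)\ge f(p-1,q)+f(p+1,q)$ for all integers $p\ge1$). *)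

(* Defs.v *)
From Stdlib Require Import Reals Lra Lia Arith.
Open Scope R_scope.

(* floor (p/u) and ceil (p/u) for natural p and positive natural u *)
Definition fl (u p : nat) : nat := Nat.div p u.
Definition cl (u p : nat) : nat := Nat.div (p + u - 1) u.

Definition fpq (u p : nat) (q : R) : R :=
  if Rle_dec q (INR (fl u p)) then q * INR u
  else if Rlt_dec q (INR (cl u p)) then
    INR u * INR (fl u p)
    + INR u * (INR p / INR u - INR (fl u p)) * (q - INR (fl u p))
  else INR p.

Definition concave_on_nonneg (g : R -> R) : Prop :=
  forall x y t, 0 <= x -> 0 <= y -> 0 <= t <= 1 ->
    t * g x + (1 - t) * g y <= g (t * x + (1 - t) * y).

(* Main.v *)
Require Import Defs.
From Stdlib Require Import Reals Lra Lia Arith Psatz ZArith.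
Open Scope R_scope.

Lemma decomp (u p : nat) : (0 < u)%nat ->
  exists r, (r < u)%nat /\ p = (u * fl u p + r)%nat /\
    ((r = 0%nat /\ cl u p = fl u p) \/ ((0 < r)%nat /\ cl u p = S (fl u p))).
Proof.
  intros hu. exists (p mod u). unfold cl, fl.
  assert (H1 := Nat.div_mod_eq p u). assert (H2 := Nat.mod_upper_bound p u ltac:(lia)).
  split; [lia|split;[lia|]].
  destruct (Nat.eq_dec (p mod u) 0) as [E|E].
  - left. split; [lia|]. symmetry. apply (Nat.div_unique _ _ _ (u-1)); lia.
  - right. split; [lia|]. symmetry. apply (Nat.div_unique _ _ _ (p mod u - 1)); lia.
Qed.

Lemma fpq_min (u p : nat) (q : R) : (0 < u)%nat ->
  exists a r : nat, (r < u)%nat /\ p = (u*a + r)%nat /\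
  fpq u p q = Rmin (q * INR u) (Rmin (INR u * INR a + INR r * (q - INR a)) (INR p)).
Proof.
  intros hu. destruct (decomp u p hu) as [r [Hr [Hp Hc]]].
  exists (fl u p), r. split; [exact Hr|split;[exact Hp|]].
  set (a := fl u p) in *.
  assert (Pr: INR p = INR u * INR a + INR r) by (rewrite Hp, plus_INR, mult_INR; ring).
  assert (Hu: 0 < INR u) by (apply lt_0_INR; lia).
  assert (Hru: INR r < INR u) by (apply lt_INR; lia).
  assert (Hr0: 0 <= INR r) by apply pos_INR.
  unfold fpq. fold a.
  destruct (Rle_dec q (INR a)) as [h1|h1].
  - rewrite Rmin_left; [reflexivity|]. apply Rmin_glb; nra.
  - destruct Hc as [[E Ec]|[E Ec]]; rewrite Ec.
    + subst r. destruct (Rlt_dec q (INR a)); [lra|].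
      simpl INR in *. rewrite (Rmin_right (INR u * INR a + 0 * (q - INR a))) by lra.
      rewrite Rmin_right; [reflexivity|]. nra.
    + rewrite S_INR. destruct (Rlt_dec q (INR a + 1)) as [h2|h2].
      * rewrite (Rmin_left (INR u * INR a + INR r * (q - INR a))) by nra.
        rewrite Rmin_right by nra.
        replace (INR p / INR u - INR a) with (INR r / INR u) by (rewrite Pr; field; lra).
        field. lra.
      * rewrite (Rmin_right (INR u * INR a + INR r * (q - INR a))) by nra.
        rewrite Rmin_right; nra.
Qed.

Lemma concave_min (g1 g2 : R -> R) : concave_on_nonneg g1 -> concave_on_nonneg g2 ->
  concave_on_nonneg (fun x => Rmin (g1 x) (g2 x)).
Proof.
  intros H1 H2 x y t hx hy ht. apply Rmin_glb.
  - specialize (H1 x y t hx hy ht).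
    assert (A := Rmin_l (g1 x) (g2 x)). assert (B := Rmin_l (g1 y) (g2 y)). nra.
  - specialize (H2 x y t hx hy ht).
    assert (A := Rmin_r (g1 x) (g2 x)). assert (B := Rmin_r (g1 y) (g2 y)). nra.
Qed.

Lemma concave_aff (a b : R) : concave_on_nonneg (fun x => a * x + b).
Proof. intros x y t _ _ _. nra. Qed.

Lemma part1 (u : nat) (hu : (0 < u)%nat) (p : nat) : concave_on_nonneg (fun q => fpq u p q).
Proof.
  intros x y t hx hy ht.
  destruct (fpq_min u p x hu) as [a [r [Hr [Hp _]]]].
  assert (E : forall z, fpq u p z = Rmin (z * INR u) (Rmin (INR u * INR a + INR r * (z - INR a)) (INR p))).
  { intros z. destruct (fpq_min u p z hu) as [a' [r' [Hr' [Hp' E']]]].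
    assert (a' = a /\ r' = r) as [-> ->].
    { assert (a' = p / u)%nat by (apply (Nat.div_unique _ _ _ r'); lia).
      assert (a = p / u)%nat by (apply (Nat.div_unique _ _ _ r); lia). split; lia. }
    exact E'. }
  rewrite !E.
  apply (concave_min (fun z => z * INR u) (fun z => Rmin (INR u * INR a + INR r * (z - INR a)) (INR p))).
  - intros x' y' t' _ _ _. nra.
  - apply (concave_min (fun z => INR u * INR a + INR r * (z - INR a)) (fun _ => INR p));
      intros x' y' t' _ _ _; nra.
  - exact hx. - exact hy. - exact ht.
Qed.

Lemma interp (u p k : nat) (s : R) : (0 < u)%nat -> 0 <= s < 1 ->
  fpq u p (INR k + s) = (1 - s) * Rmin (INR (k*u)) (INR p) + s * Rmin (INR ((k+1)*u)) (INR p).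
Proof.
  intros hu hs. destruct (decomp u p hu) as [r [Hr [Hp Hc]]].
  set (a := fl u p) in *.
  assert (Pr: INR p = INR u * INR a + INR r) by (rewrite Hp, plus_INR, mult_INR; ring).
  assert (Hu: 0 < INR u) by (apply lt_0_INR; lia).
  assert (Hru: INR r < INR u) by (apply lt_INR; lia).
  assert (Hr0: 0 <= INR r) by apply pos_INR.
  rewrite !mult_INR, plus_INR. simpl (INR 1).
  unfold fpq. fold a.
  destruct (lt_eq_lt_dec k a) as [[Hk|Hk]|Hk].
  - assert (Hk': INR k + 1 <= INR a) by (rewrite <- S_INR; apply le_INR; lia).
    destruct (Rle_dec (INR k + s) (INR a)) as [h|h]; [|lra].
    rewrite Rmin_left by nra. rewrite Rmin_left by nra. ring.
  - subst k. destruct (Rle_dec (INR a + s) (INR a)) as [h|h].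
    + assert (s = 0) by lra. subst s. rewrite Rmin_left by nra. ring.
    + destruct Hc as [[E Ec]|[E Ec]]; rewrite Ec.
      * subst r. simpl in Pr. destruct (Rlt_dec (INR a + s) (INR a)); [lra|].
        rewrite Rmin_left by nra. rewrite Rmin_right by nra. nra.
      * rewrite S_INR. destruct (Rlt_dec (INR a + s) (INR a + 1)); [|lra].
        rewrite Rmin_left by nra. rewrite Rmin_right by nra.
        replace (INR p / INR u - INR a) with (INR r / INR u) by (rewrite Pr; field; lra).
        rewrite Pr. field. lra.
  - assert (Hk': INR a + 1 <= INR k) by (rewrite <- S_INR; apply le_INR; lia).
    destruct (Rle_dec (INR k + s) (INR a)) as [h|h]; [lra|].
    assert (INR (cl u p) <= INR a + 1) by
      (destruct Hc as [[_ Ec]|[_ Ec]]; rewrite Ec; [lra| rewrite S_INR; lra]).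
    destruct (Rlt_dec (INR k + s) (INR (cl u p))); [lra|].
    rewrite Rmin_right by nra. rewrite Rmin_right by nra. ring.
Qed.

Lemma minconc (c p : nat) : (1 <= p)%nat ->
  Rmin (INR c) (INR (p - 1)) + Rmin (INR c) (INR (p + 1)) <= 2 * Rmin (INR c) (INR p).
Proof.
  intros hp. rewrite minus_INR by lia. rewrite plus_INR. simpl (INR 1).
  destruct (lt_eq_lt_dec c p) as [[H|H]|H].
  - assert (INR c + 1 <= INR p) by (rewrite <- S_INR; apply le_INR; lia).
    rewrite !Rmin_left by lra. lra.
  - subst. rewrite Rmin_right by lra. rewrite Rmin_left by lra. rewrite Rmin_left by lra. lra.
  - assert (INR p + 1 <= INR c) by (rewrite <- S_INR; apply le_INR; lia).
    rewrite !Rmin_right by lra. lra.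
Qed.

Theorem claim1 (u : nat) (hu : (0 < u)%nat) :
  (forall p : nat, concave_on_nonneg (fun q => fpq u p q)) /\
  (forall (q : R), 0 <= q ->
     forall p : nat, (1 <= p)%nat ->
       fpq u (p - 1) q + fpq u (p + 1) q <= 2 * fpq u p q).
Proof.
  split; [apply part1; exact hu|].
  intros q hq p hp.
  destruct (archimed q) as [A B].
  assert (Hz: (0 <= up q - 1)%Z).
  { assert (0 < up q)%Z by (apply lt_IZR; lra). lia. }
  set (k := Z.to_nat (up q - 1)).
  assert (Hk : INR k = IZR (up q) - 1).
  { unfold k. rewrite INR_IZR_INZ, Z2Nat.id by exact Hz. rewrite minus_IZR. reflexivity. }
  set (s := q - INR k).
  assert (hs : 0 <= s < 1) by (unfold s; lra).
  replace q with (INR k + s) by (unfold s; ring).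
  rewrite !interp by assumption.
  assert (M1 := minconc (k*u) p hp). assert (M2 := minconc ((k+1)*u) p hp). nra.
Qed.
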